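(* Let $k=\mathbb R$ or $\mathbb C$, let $(V,g)$ be an inner product vector space over $k$, let $f\in\operatorname{End}_k(V)$, and let $\mathcal H_f=\{H_i\}_{i\in I}$ be a family of finite-dimensional $f$-invariant subspaces with $V=\bigoplus_{i\in I}H_i$ and $H_i\subseteq\big[\sum_{j\ne i}H_j\big]^\perp$ for every $i\in I$. Then $f$ is admissible for the Moore-Penrose inverse and $f^+_{\mathcal H_f}=f^\dagger$.
   Context: An inner product is linear in the first argument, conjugate-symmetric and positive definite; $U^\perp=\{v\in V:g(u,v)=0\ \forall u\in U\}$. $V=\bigoplus_{i\in I}H_i$ means the natural map $\bigoplus H_i\to V$ is an isomorphism. $f$ is admissible for the Moore-Penrose inverse if $V=\operatorname{Ker} f\oplus[\operatorname{Ker} f]^\perp=\operatorname{Im} f\oplus[\operatorname{Im} f]^\perp$; its Moore-Penrose inverse $f^\dagger$ is then the linear map equal to $(f|_{[\operatorname{Ker} f]^\perp})^{-1}$ on $\operatorname{Im} f$ and $0$ on $[\operatorname{Im} f]^\perp$. Writing $f_i=f|_{H_i}\in\operatorname{End}_k(H_i)$ (with $H_i$ carrying the restricted inner product), $f_i^\dagger$ denotes its (finite-dimensional) Moore-Penrose inverse, and $f^+_{\mathcal H_f}$ is the unique linear endomorphism of $V$ with $f^+_{\mathcal H_f}|_{H_i}=f_i^\dagger$ for all $i\in I$. *)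

(* Defs.v *)
(* k is a numFieldType (R : realType, or R[i] = complex R). *)
From mathcomp Require Import all_boot all_algebra.
From mathcomp Require Import reals complex.
From Stdlib Require List.
Set Implicit Arguments. Unset Strict Implicit. Unset Printing Implicit Defensive.
Import GRing.Theory Num.Theory.
Local Open Scope ring_scope.

Section InnerProductSpaces.
Variables (k : numFieldType) (conj : k -> k) (V : lmodType k).

(* g is an inner product: linear in the first argument, conjugate-symmetric,
   positive definite (for k = C, "0 < z" in the numField order means z is
   real and positive). *)
Definition is_inner_product (g : V -> V -> k) : Prop :=
  [/\ forall (a : k) (u v w : V), g (a *: u + v) w = a * g u w + g v w,
      forall u v : V, g u v = conj (g v u)
    & forall v : V, v != 0 -> 0 < g v v].

Definition subspace (W : V -> Prop) : Prop :=
  W 0 /\ forall (a : k) (u v : V), W u -> W v -> W (a *: u + v).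

Definition finite_dim (W : V -> Prop) : Prop :=
  exists s : seq V, (forall i : 'I_(size s), W s`_i) /\
    forall v, W v -> exists c : 'I_(size s) -> k, v = \sum_(i < size s) c i *: s`_i.

Definition invariant (f : V -> V) (W : V -> Prop) : Prop :=
  forall v, W v -> W (f v).

Definition orth (g : V -> V -> k) (U : V -> Prop) : V -> Prop :=
  fun v => forall u, U u -> g u v = 0.

(* The natural map (+)_i H_i -> V sends a finitely supported family h
   (h i in H i) to its sum.  [dsum_rel h v] : h is finitely supported and
   sums to v. *)
Definition dsum_rel (I : Type) (h : I -> V) (v : V) : Prop :=
  exists J : seq I, [/\ List.NoDup J, (forall i, ~ List.In i J -> h i = 0)
                      & v = \sum_(i <- J) h i].

(* V = (+)_{i in I} H_i : the natural map is bijective (it is linear). *)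
Definition is_direct_sum (I : Type) (H : I -> V -> Prop) : Prop :=
  (forall v, exists h : I -> V, (forall i, H i (h i)) /\ dsum_rel h v) /\
  (forall (h1 h2 : I -> V) (v : V), (forall i, H i (h1 i)) -> (forall i, H i (h2 i)) ->
      dsum_rel h1 v -> dsum_rel h2 v -> h1 = h2).

Definition sum_except (I : Type) (H : I -> V -> Prop) (i : I) : V -> Prop :=
  fun w => exists (J : seq I) (h : I -> V),
    [/\ ~ List.In i J, forall j, List.In j J -> H j (h j) & w = \sum_(j <- J) h j].

Definition is_direct_sum2 (A B : V -> Prop) : Prop :=
  (forall v, exists a b, [/\ A a, B b & v = a + b]) /\
  (forall a1 a2 b1 b2, A a1 -> A a2 -> B b1 -> B b2 ->
      a1 + b1 = a2 + b2 -> a1 = a2 /\ b1 = b2).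

Definition ker_on (W : V -> Prop) (f : V -> V) : V -> Prop :=
  fun v => W v /\ f v = 0.
Definition im_on (W : V -> Prop) (f : V -> V) : V -> Prop :=
  fun v => exists w, W w /\ f w = v.
Definition orth_on (g : V -> V -> k) (W U : V -> Prop) : V -> Prop :=
  fun v => W v /\ orth g U v.

Definition setTV : V -> Prop := fun _ => True.

Definition MP_admissible (g : V -> V -> k) (f : V -> V) : Prop :=
  is_direct_sum2 (ker_on setTV f) (orth g (ker_on setTV f)) /\
  is_direct_sum2 (im_on setTV f) (orth g (im_on setTV f)).

(* h (restricted to W) is the Moore-Penrose inverse of f|_W on (W, g|_W):
   h maps W to W, on Im(f|_W) it equals (f|_{[Ker f|_W]^perp})^{-1}, and it
   vanishes on [Im f|_W]^perp (complements taken inside W). *)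
Definition is_MP_inverse_on (g : V -> V -> k) (W : V -> Prop) (f h : V -> V) : Prop :=
  [/\ forall v, W v -> W (h v),
      forall v, im_on W f v ->
        orth_on g W (ker_on W f) (h v) /\ f (h v) = v
    & forall v, orth_on g W (im_on W f) v -> h v = 0].

Definition is_MP_inverse (g : V -> V -> k) (f h : V -> V) : Prop :=
  is_MP_inverse_on g setTV f h.

End InnerProductSpaces.

Definition corollary3p21_claim (k : numFieldType) (conj : k -> k) : Prop :=
  forall (V : lmodType k) (g : V -> V -> k) (f : {linear V -> V})
         (I : Type) (H : I -> V -> Prop),
    is_inner_product conj g ->
    (forall i, subspace (H i)) ->
    (forall i, finite_dim (H i)) ->
    (forall i, invariant f (H i)) ->
    is_direct_sum H ->
    (forall i v, H i v -> orth g (sum_except H i) v) ->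
    MP_admissible g f /\
    (* f^+_{H_f} exists: a linear endomorphism restricting to f_i^dagger on each H_i *)
    (exists fp : {linear V -> V}, forall i, is_MP_inverse_on g (H i) f fp) /\
    (* and f^+_{H_f} = f^dagger *)
    (forall fp : {linear V -> V},
        (forall i, is_MP_inverse_on g (H i) f fp) -> is_MP_inverse g f fp).

(* Main.v *)
Require Import Defs.
From mathcomp Require Import all_boot all_algebra.
From mathcomp Require Import reals complex.
From HB Require Import structures.
From Stdlib Require Import Classical ClassicalEpsilon.
From Stdlib Require List.
Set Implicit Arguments. Unset Strict Implicit. Unset Printing Implicit Defensive.
Import mathcomp.order.order.Order.TTheory GRing.Theory Num.Theory.
Local Open Scope ring_scope.

Lemma choice_fun (A B : Type) (P : A -> B -> Prop) :
  (forall a, exists b, P a b) -> exists F, forall a, P a (F a).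
Proof.
move=> h; exists (fun a => proj1_sig (constructive_indefinite_description _ (h a))).
move=> a; exact: (proj2_sig (constructive_indefinite_description _ (h a))).
Qed.

Lemma sum0_in (T : Type) (M : zmodType) (J : seq T) (F : T -> M) :
  (forall j, List.In j J -> F j = 0) -> \sum_(j <- J) F j = 0.
Proof.
elim: J => [|l J IH] h; first by rewrite big_nil.
rewrite big_cons h /=; last by left.
rewrite add0r IH // => j hj; apply: h; by right.
Qed.

Lemma extract (T : Type) (M : zmodType) (J : seq T) (F : T -> M) j :
  List.NoDup J -> List.In j J -> (forall l, List.In l J -> l <> j -> F l = 0) ->
  \sum_(l <- J) F l = F j.
Proof.
elim: J => [|l J IH] //= nd hin hz.
move/List.NoDup_cons_iff: nd => [nl nd].
rewrite big_cons.
case: (classic (l = j)) => [E|ne].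
  subst l; rewrite sum0_in ?addr0 // => l' hl'; apply: hz; first by right.
  by move=> E; apply: nl; subst.
case: hin => [E|hin]; first by case: (ne E).
rewrite (hz l) ?add0r; first (apply: IH => // l' hl' ne'; apply: hz => //; by right).
  by left.
done.
Qed.

Section Gen.
Variables (k : numFieldType) (conj : k -> k) (V : lmodType k) (g : V -> V -> k).
Hypothesis Hg : is_inner_product conj g.

Lemma gDl u v w : g (u + v) w = g u w + g v w.
Proof. case: Hg => lin _ _. by rewrite -[u in LHS]scale1r lin mul1r. Qed.

Lemma g0l w : g 0 w = 0.
Proof.
have h := gDl 0 0 w; rewrite addr0 in h.
apply: (addrI (g 0 w)); by rewrite addr0 -h.
Qed.

Lemma gZl a u w : g (a *: u) w = a * g u w.
Proof. case: Hg => lin _ _. by rewrite -[a *: u]addr0 lin g0l addr0. Qed.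

Lemma gBl u v w : g (u - v) w = g u w - g v w.
Proof. by rewrite gDl -scaleN1r gZl mulN1r. Qed.

Lemma conj0 : conj 0 = 0.
Proof. case: Hg => _ sym _. by rewrite -{1}(g0l 0) -sym g0l. Qed.

Lemma gflip u v : g u v = 0 -> g v u = 0.
Proof. case: Hg => _ sym _ h. by rewrite sym h conj0. Qed.

Lemma gpos v : g v v = 0 -> v = 0.
Proof.
case: Hg => _ _ pos h. case: (eqVneq v 0) => // /pos. by rewrite h ltxx.
Qed.

Lemma gsuml (I : Type) (J : seq I) F w :
  g (\sum_(i <- J) F i) w = \sum_(i <- J) g (F i) w.
Proof.
elim: J => [|j J IH]; first by rewrite !big_nil g0l.
by rewrite !big_cons gDl IH.
Qed.

Lemma sub0 (W : V -> Prop) : subspace W -> W 0.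
Proof. by case. Qed.

Lemma subD (W : V -> Prop) u v : subspace W -> W u -> W v -> W (u + v).
Proof. case=> _ h hu hv. rewrite -[u]scale1r; exact: h. Qed.

Lemma subZ (W : V -> Prop) a u : subspace W -> W u -> W (a *: u).
Proof. move=> hW hu. rewrite -[_ *: _]addr0; case: hW => h0 h; exact: h. Qed.

Lemma subB (W : V -> Prop) u v : subspace W -> W u -> W v -> W (u - v).
Proof. move=> hW hu hv. rewrite -scaleN1r addrC; case: hW => h0 h; exact: h. Qed.

Lemma subsum (W : V -> Prop) (I : Type) (J : seq I) F : subspace W ->
  (forall i, List.In i J -> W (F i)) -> W (\sum_(i <- J) F i).
Proof.
move=> hW; elim: J => [|j J IH] h; first by rewrite big_nil; exact: sub0.
rewrite big_cons; apply: subD => //; first by apply: h; left.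
apply: IH => i hi; apply: h; by right.
Qed.

Lemma orth_sub U : subspace (orth g U).
Proof.
split; first by move=> u _; apply: gflip; exact: g0l.
move=> a b c hb hc u hu; apply: gflip.
by rewrite gDl gZl (gflip (hb u hu)) (gflip (hc u hu)) mulr0 addr0.
Qed.

Lemma int_sub (W1 W2 : V -> Prop) : subspace W1 -> subspace W2 ->
  subspace (fun x => W1 x /\ W2 x).
Proof.
move=> [a1 b1] [a2 b2]; split; first by split.
move=> a u v [h1 h2] [h3 h4]; split; [exact: b1 | exact: b2].
Qed.

Lemma ker_sub (f : {linear V -> V}) W : subspace W -> subspace (ker_on W f).
Proof.
move=> [h0 h]; split; first by split => //; rewrite raddf0.
move=> a u v [hu fu] [hv fv]; split; first exact: h.
by rewrite linearP fu fv scaler0 addr0.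
Qed.

Lemma im_sub (f : {linear V -> V}) W : subspace W -> subspace (im_on W f).
Proof.
move=> [h0 h]; split; first by exists 0; rewrite raddf0.
move=> a u v [w1 [hw1 <-]] [w2 [hw2 <-]]; exists (a *: w1 + w2); split.
  exact: h.
by rewrite linearP.
Qed.

Lemma setT_sub : subspace (@setTV _ V).
Proof. by []. Qed.

Lemma orth_inter U x : U x -> orth g U x -> x = 0.
Proof. move=> hx ox; apply: gpos; exact: ox. Qed.

Lemma ds2_uniq U : subspace U -> forall a1 a2 b1 b2, U a1 -> U a2 ->
  orth g U b1 -> orth g U b2 -> a1 + b1 = a2 + b2 -> a1 = a2 /\ b1 = b2.
Proof.
move=> hU a1 a2 b1 b2 ha1 ha2 hb1 hb2 E.
have e : a1 - a2 = b2 - b1.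
  by apply/eqP; rewrite subr_eq addrAC (addrC b2) -E addrK.
have x0 : a1 - a2 = 0.
  apply: (@orth_inter U); first exact: subB.
  by rewrite e; apply: (@subB (orth g U)) => //; exact: orth_sub.
have ea := subr0_eq x0; split => //.
by move: E; rewrite ea => /addrI.
Qed.

Fixpoint span (t : seq V) (u : V) : Prop :=
  if t is x :: t' then exists a u', span t' u' /\ u = a *: x + u' else u = 0.

Lemma span_sub t : subspace (span t).
Proof.
elim: t => [|x t IH]; first by split => //= a u v -> ->; rewrite scaler0 addr0.
split; first by exists 0, 0; split; [exact: sub0 | rewrite scale0r addr0].
move=> a u v [b [u' [su ->]]] [c [v' [sv ->]]].
exists (a * b + c), (a *: u' + v'); split; first by case: IH => _; apply.
by rewrite scalerDr scalerA scalerDl addrACA.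
Qed.

Lemma span_mem x t : List.In x t -> span t x.
Proof.
elim: t => [|y t IH] //= [E|hin].
  subst y; exists 1, 0; split; [exact: (sub0 (span_sub t)) | by rewrite scale1r addr0].
exists 0, x; split; [exact: IH | by rewrite scale0r add0r].
Qed.

Lemma span_min (W : V -> Prop) t : subspace W -> (forall x, List.In x t -> W x) ->
  forall u, span t u -> W u.
Proof.
move=> hW; elim: t => [|x t IH] h u /=; first by move=> ->; exact: sub0.
move=> [a [u' [su ->]]]; case: hW => _ hW; apply: hW; first by apply: h; left.
apply: IH => // y hy; apply: h; by right.
Qed.

Lemma proj t : forall v, exists u, span t u /\ forall y, span t y -> g y (v - u) = 0.
Proof.
elim: t => [|x t IH] v.
  by exists 0; split => //= y ->; rewrite g0l.
have [u1 [s1 o1]] := IH v.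
have [u2 [s2 o2]] := IH x.
set w' := v - u1; set x' := x - u2.
set a := g w' x' / g x' x'.
exists (u1 + a *: x'); split.
  exists a, (u1 - a *: u2); split.
    by apply: subB; [exact: span_sub | done | apply: subZ => //; exact: span_sub].
  by rewrite /x' scalerBr addrCA addrA.
have -> : v - (u1 + a *: x') = w' - a *: x' by rewrite opprD addrA.
have A : forall y', span t y' -> g y' (w' - a *: x') = 0.
  move=> y' hy'; apply: gflip.
  by rewrite gBl gZl (gflip (o1 _ hy')) (gflip (o2 _ hy')) mulr0 subr0.
have B : g x' (w' - a *: x') = 0.
  apply: gflip; case: (eqVneq (g x' x') 0) => [/gpos ->|nz].
    by apply: gflip; rewrite g0l.
  by rewrite gBl gZl /a divfK // subrr.
move=> y [b [y' [sy' ->]]].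
rewrite gDl gZl (A y' sy') addr0.
have -> : x = x' + u2 by rewrite /x' subrK.
by rewrite gDl B (A u2 s2) addr0 mulr0.
Qed.

Lemma sub_fin s : forall U : V -> Prop, subspace U -> (forall u, U u -> span s u) ->
  exists t, (forall x, List.In x t -> U x) /\ (forall u, U u -> span t u).
Proof.
elim: s => [|x s IH] U hU hs.
  by exists [::]; split.
case: (classic (exists u0 c w0, [/\ U u0, c != 0, span s w0 & u0 = c *: x + w0])).
  move=> [u0 [c [w0 [Uu0 c0 sw0 e0]]]].
  have [t' [ht1 ht2]] := IH (fun u => U u /\ span s u) (int_sub hU (span_sub s))
    (fun u h => h.2).
  exists (u0 :: t'); split.
    by move=> z /= [<-|hz] //; exact: (ht1 z hz).1.
  move=> u hu; have := hs u hu => /= [[a [w [sw e]]]].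
  exists (a / c), (u - (a / c) *: u0); split; last by rewrite addrC subrK.
  apply: ht2; split; first by apply: subB => //; exact: subZ.
  have -> : u - (a / c) *: u0 = w - (a / c) *: w0.
    by rewrite e e0 scalerDr scalerA divfK // opprD addrACA subrr add0r.
  apply: subB; [exact: span_sub | done | apply: subZ => //; exact: span_sub].
move=> nex.
apply: IH => // u hu; have := hs u hu => /= [[a [w [sw e]]]].
case: (eqVneq a 0) => [a0|an0]; first by rewrite e a0 scale0r add0r.
by exfalso; apply: nex; exists u, a, w; split.
Qed.

Lemma sum_span s (c : 'I_(size s) -> k) : span s (\sum_(i < size s) c i *: s`_i).
Proof.
elim: s c => [|x s IH] c /=; first by rewrite big_ord0.
rewrite big_ord_recl /=.
exists (c ord0), (\sum_(i < size s) c (lift ord0 i) *: s`_i); split => //.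
Qed.

Lemma fin_span (W : V -> Prop) : finite_dim W -> exists s, forall v, W v -> span s v.
Proof. move=> [s [_ hs]]; exists s => v /hs [c ->]; exact: sum_span. Qed.

Lemma local_dec (W U : V -> Prop) : subspace W -> finite_dim W -> subspace U ->
  (forall u, U u -> W u) -> forall v, W v ->
  exists a b, [/\ U a, W b, orth g U b & v = a + b].
Proof.
move=> hW fW hU hUW v hv.
have [s hs] := fin_span fW.
have [t [ht1 ht2]] := sub_fin hU (fun u hu => hs u (hUW u hu)).
have [u [su ou]] := proj t v.
have Uu : U u by exact: (span_min hU ht1).
exists u, (v - u); split => //; first by apply: subB => //; exact: hUW.
  by move=> y hy; apply: ou; exact: ht2.
by rewrite addrC subrK.
Qed.

Section Main.
Variables (f : {linear V -> V}) (I : Type) (H : I -> V -> Prop).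
Hypotheses (Hsub : forall i, subspace (H i)) (Hfin : forall i, finite_dim (H i))
  (Hinv : forall i, Defs.invariant f (H i)) (Hds : is_direct_sum H)
  (Horth : forall i v, H i v -> orth g (sum_except H i) v).

Lemma cross i j x y : i <> j -> H i x -> H j y -> g x y = 0.
Proof.
move=> ne hx hy; apply: (Horth hy); exists [:: i], (fun _ => x); split.
- by move=> /= [E|].
- by move=> l /= [<-|].
- by rewrite big_seq1.
Qed.

Lemma kerfam u h J : (forall i, H i (h i)) -> List.NoDup J ->
  (forall i, ~ List.In i J -> h i = 0) -> u = \sum_(i <- J) h i -> f u = 0 ->
  forall i, f (h i) = 0.
Proof.
move=> hH nd hz e fu.
have E := Hds.2 (fun i => f (h i)) (fun _ => 0) 0 (fun i => Hinv (hH i))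
  (fun i => sub0 (Hsub i)).
have /E {}E : dsum_rel (fun i => f (h i)) 0.
  exists J; split => //; first by move=> i ni; rewrite hz // raddf0.
  by rewrite -raddf_sum -e -fu.
have /E {}E : dsum_rel (fun _ : I => 0 : V) 0.
  by exists [::]; split => //; [exact: List.NoDup_nil | rewrite big_nil].
by move=> i; exact: (congr1 (fun F => F i) E).
Qed.

Lemma ker_l2g i x : H i x -> orth g (ker_on (H i) f) x -> orth g (ker_on (@setTV _ V) f) x.
Proof.
move=> hx ox u [_ fu].
have [h [hH [J [nd hz e]]]] := Hds.1 u.
rewrite e gsuml; apply: big1 => l _.
case: (classic (l = i)) => [E|ne].
  subst l; apply: ox; split => //; exact: (kerfam hH nd hz e fu).
exact: (cross ne (hH l) hx).
Qed.

Lemma im_l2g i x : H i x -> orth g (im_on (H i) f) x -> orth g (im_on (@setTV _ V) f) x.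
Proof.
move=> hx ox u [w [_ <-]].
have [h [hH [J [nd hz e]]]] := Hds.1 w.
rewrite e raddf_sum gsuml; apply: big1 => l _.
case: (classic (l = i)) => [E|ne].
  subst l; apply: ox; exists (h i); split => //.
exact: (cross ne (Hinv (hH l)) hx).
Qed.

Lemma im_in l u : im_on (H l) f u -> H l u.
Proof. case=> w [hw <-]; exact: Hinv. Qed.

Lemma adm : MP_admissible g f.
Proof.
split; split.
- move=> v; have [h [hH [J [nd hz e]]]] := Hds.1 v.
  have loc : forall l, exists p : V * V, [/\ ker_on (H l) f p.1, H l p.2,
      orth g (ker_on (H l) f) p.2 & h l = p.1 + p.2].
    move=> l; have [a [b [ha hb ob E]]] := local_dec (Hsub l) (Hfin l)
      (ker_sub f (Hsub l)) (fun u hu => hu.1) (hH l).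
    by exists (a, b).
  have [P PP] := choice_fun loc.
  exists (\sum_(l <- J) (P l).1), (\sum_(l <- J) (P l).2); split.
  + split => //; rewrite raddf_sum; apply: big1 => l _.
    by case: (PP l) => [[_ hf]] *; exact: hf.
  + apply: subsum; first exact: orth_sub.
    move=> l _; case: (PP l) => _ h1 h2 _; exact: (ker_l2g h1 h2).
  + by rewrite e -big_split; apply: eq_bigr => l _; case: (PP l).
- apply: ds2_uniq; exact: ker_sub.
- move=> v; have [h [hH [J [nd hz e]]]] := Hds.1 v.
  have loc : forall l, exists p : V * V, [/\ im_on (H l) f p.1, H l p.2,
      orth g (im_on (H l) f) p.2 & h l = p.1 + p.2].
    move=> l; have [a [b [ha hb ob E]]] := local_dec (Hsub l) (Hfin l)
      (im_sub f (Hsub l)) (@im_in l) (hH l).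
    by exists (a, b).
  have [P PP] := choice_fun loc.
  exists (\sum_(l <- J) (P l).1), (\sum_(l <- J) (P l).2); split.
  + apply: subsum; first exact: im_sub.
    by move=> l _; case: (PP l) => [[w [_ <-]]] _ _ _; exists w.
  + apply: subsum; first exact: orth_sub.
    move=> l _; case: (PP l) => _ h1 h2 _; exact: (im_l2g h1 h2).
  + by rewrite e -big_split; apply: eq_bigr => l _; case: (PP l).
- apply: ds2_uniq; exact: im_sub.
Qed.

Definition Char v p := orth g (ker_on (@setTV _ V) f) p /\ orth g (im_on (@setTV _ V) f) (v - f p).

Lemma exists_char v : exists p, Char v p.
Proof.
have [[K1 K2] [I1 I2]] := adm.
have [m [q [[w [_ fw]] hq e]]] := I1 v.
have [a [p [ha hp ew]]] := K1 w.
exists p; split => //.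
have -> : v - f p = q.
  have fa : f a = 0 := ha.2. by rewrite e -fw ew linearD fa add0r addrAC subrr add0r.
done.
Qed.

Lemma uniq_char v p1 p2 : Char v p1 -> Char v p2 -> p1 = p2.
Proof.
move=> [k1 o1] [k2 o2].
have x0 : f p1 - f p2 = 0.
  apply: (@orth_inter (im_on (@setTV _ V) f)); first by exists (p1 - p2); rewrite raddfB.
  have -> : f p1 - f p2 = (v - f p2) - (v - f p1).
    by rewrite opprB (addrC (v - _)) addrA subrK.
  apply: (@subB (orth g (im_on (@setTV _ V) f))) => //; exact: orth_sub.
apply: subr0_eq; apply: (@orth_inter (ker_on (@setTV _ V) f)).
  by split => //; rewrite raddfB.
apply: (@subB (orth g (ker_on (@setTV _ V) f))) => //; exact: orth_sub.
Qed.

Definition fpf v := proj1_sig (constructive_indefinite_description _ (exists_char v)).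
Lemma fpfP v : Char v (fpf v).
Proof. exact: proj2_sig (constructive_indefinite_description _ (exists_char v)). Qed.
Lemma fpf_eq v p : Char v p -> fpf v = p.
Proof. exact: uniq_char (fpfP v). Qed.

Lemma fpf_lin : linear fpf.
Proof.
move=> a u v; apply: fpf_eq; split.
  by apply: (orth_sub _).2; [exact: (fpfP u).1 | exact: (fpfP v).1].
have -> : a *: u + v - f (a *: fpf u + fpf v) = a *: (u - f (fpf u)) + (v - f (fpf v)).
  by rewrite linearP opprD addrACA scalerBr.
by apply: (orth_sub _).2; [exact: (fpfP u).2 | exact: (fpfP v).2].
Qed.

HB.instance Definition _ := GRing.isLinear.Build k V V *:%R fpf fpf_lin.

Lemma fpf_im i v : im_on (H i) f v ->
  [/\ H i (fpf v), orth g (ker_on (H i) f) (fpf v) & f (fpf v) = v].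
Proof.
move=> [w0 [hw0 <-]].
have [a [p [ha hp op e]]] := local_dec (Hsub i) (Hfin i) (ker_sub f (Hsub i))
  (fun u hu => hu.1) hw0.
have fp : f w0 = f p by have fa : f a = 0 := ha.2; rewrite e linearD fa add0r.
have -> : fpf (f w0) = p.
  apply: fpf_eq; split; first exact: (ker_l2g hp op).
  rewrite fp subrr; exact: (sub0 (orth_sub _)).
by split.
Qed.

Lemma fpf_orth i v : orth_on g (H i) (im_on (H i) f) v -> fpf v = 0.
Proof.
move=> [hv ov]; apply: fpf_eq; split; first exact: (sub0 (orth_sub _)).
rewrite raddf0 subr0; exact: (im_l2g hv ov).
Qed.

Lemma fpf_loc i : is_MP_inverse_on g (H i) f fpf.
Proof.
split.
- move=> v hv.
  have [m [q [hm hq oq e]]] := local_dec (Hsub i) (Hfin i) (im_sub f (Hsub i))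
    (@im_in i) hv.
  have fD : fpf (m + q) = fpf m + fpf q.
    by have := fpf_lin 1 m q; rewrite !scale1r.
  rewrite e fD (@fpf_orth i q) ?addr0; first by case: (fpf_im hm).
  by split.
- move=> v hv; have [h1 h2 h3] := fpf_im hv; by split.
- exact: fpf_orth.
Qed.

Lemma glob (fp : {linear V -> V}) :
  (forall i, is_MP_inverse_on g (H i) f fp) -> is_MP_inverse g f fp.
Proof.
move=> hl; split.
- by move=> *; exact: Logic.I.
- move=> v [w [_ <-]].
  have [h [hH [J [nd hz e]]]] := Hds.1 w.
  have hp : forall l, orth_on g (H l) (ker_on (H l) f) (fp (f (h l))) /\
      f (fp (f (h l))) = f (h l).
    move=> l; case: (hl l) => _ h2 _; apply: h2; by exists (h l).
  rewrite e !raddf_sum; split.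
    split => //; apply: subsum; first exact: orth_sub.
    move=> l _; have [[h1 h2] _] := hp l; exact: (ker_l2g h1 h2).
  by rewrite ?raddf_sum; apply: eq_bigr => l _; case: (hp l).
- move=> v [_ ov].
  have [h [hH [J [nd hz e]]]] := Hds.1 v.
  rewrite e raddf_sum; apply: sum0_in => l hl'.
  case: (hl l) => _ _; apply; split; first exact: hH.
  move=> y [w [hw <-]]; apply: gflip.
  have := gflip (ov (f w) (ex_intro _ w (Logic.conj Logic.I erefl))).
  rewrite e gsuml (@extract _ _ J _ l) //.
  move=> l' hl'' ne; exact: (cross ne (hH l') (Hinv hw)).
Qed.

Lemma main : MP_admissible g f /\
    (exists fp : {linear V -> V}, forall i, is_MP_inverse_on g (H i) f fp) /\
    (forall fp : {linear V -> V},
        (forall i, is_MP_inverse_on g (H i) f fp) -> is_MP_inverse g f fp).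
Proof.
split; first exact: adm.
split; last exact: glob.
by exists fpf; exact: fpf_loc.
Qed.

End Main.
End Gen.

Lemma claim_all (k : numFieldType) (conj : k -> k) : corollary3p21_claim conj.
Proof.
move=> V g f I H Hg Hsub Hfin Hinv Hds Horth.
exact: (main Hg Hsub Hfin Hinv Hds Horth).
Qed.

Theorem corollary3p21 (R : realType) :
  corollary3p21_claim (fun x : R => x) /\
  corollary3p21_claim (@Num.Def.conjC (R[i] : numClosedFieldType)).
Proof. split; exact: claim_all. Qed.
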